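(* Let $f\in C^{1,1}_L(\mathbb{R}^2)$, let $\mathcal{Y}=\{y_1,y_2,y_3\}\subset\mathbb{R}^2$ be affinely independent with $\langle y_2-y_1,y_3-y_1\rangle<0$, and let $m$ be the affine function interpolating $f$ on $\mathcal{Y}$. Let $y_0\in\mathbb{R}^2$ have barycentric coordinates satisfying $\ell_2>0$, $\ell_3<0$, and $\ell_1\langle y_2-y_1,y_3-y_1\rangle-\ell_3\langle y_2-y_3,y_1-y_3\rangle<0$. Let $G=\sum_{i=0}^{3}\ell_iy_iy_i^T$ and $H^\star=P\begin{bmatrix}L&0\\0&-L\end{bmatrix}P^{-1}$ with $P=[\,y_2-y_0\ \ y_1-y_3\,]$. Then $$|m(y_0)-f(y_0)|\le\tfrac12\langle G,H^\star\rangle .$$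
   Context: Let $L>0$. $C^{1,1}_L(\mathbb{R}^2)$ denotes the set of differentiable $f:\mathbb{R}^2\to\mathbb{R}$ with $\|\nabla f(u_1)-\nabla f(u_2)\|\le L\|u_1-u_2\|$ for all $u_1,u_2$ (Euclidean norm). $m$ is the unique affine function with $m(y_i)=f(y_i)$, $i=1,2,3$. The barycentric coordinates of $y_0$ w.r.t. $\mathcal{Y}$ are the unique reals $\ell_1,\ell_2,\ell_3$ with $\ell_1+\ell_2+\ell_3=1$ and $\ell_1y_1+\ell_2y_2+\ell_3y_3=y_0$; one sets $\ell_0=-1$. The matrix $P$ is invertible under these hypotheses. For matrices, $\langle A,B\rangle=\sum_{i,j}A_{ij}B_{ij}$ (here $H^\star$ need not be symmetric). *)

(* Defs.v *)
From HB Require Import structures.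
From mathcomp Require Import all_boot all_order all_algebra.
From mathcomp Require Import all_classical all_reals all_analysis.
Set Implicit Arguments. Unset Strict Implicit. Unset Printing Implicit Defensive.
Import Order.TTheory GRing.Theory Num.Theory.
Import numFieldNormedType.Exports.
Local Open Scope ring_scope.

Section Defs.
Variable R : realType.

Definition dotv (u v : 'cV[R]_2) : R := \sum_(i < 2) u i 0 * v i 0.
Definition enorm (u : 'cV[R]_2) : R := Num.sqrt (dotv u u).

Definition frob (A B : 'M[R]_2) : R := \sum_(i < 2) \sum_(j < 2) A i j * B i j.

Definition grad (f : 'cV[R]_2 -> R) (x : 'cV[R]_2) : 'cV[R]_2 :=
  \col_(i < 2) ('d f x (delta_mx i 0 : 'cV[R]_2)).

Definition C11 (L : R) (f : 'cV[R]_2 -> R) : Prop :=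
  (forall x, differentiable f x) /\
  (forall u1 u2, enorm (grad f u1 - grad f u2) <= L * enorm (u1 - u2)).

Definition aff_indep (y1 y2 y3 : 'cV[R]_2) : Prop :=
  forall a b : R, a *: (y2 - y1) + b *: (y3 - y1) = 0 -> a = 0 /\ b = 0.

Definition is_affine (m : 'cV[R]_2 -> R) : Prop :=
  exists (g : 'cV[R]_2) (c : R), forall x, m x = dotv g x + c.

Definition mx_cols (u v : 'cV[R]_2) : 'M[R]_2 :=
  \matrix_(i < 2, j < 2) (if j == 0 then u i 0 else v i 0).

Definition Gmx (l1 l2 l3 : R) (y0 y1 y2 y3 : 'cV[R]_2) : 'M[R]_2 :=
  (-1) *: (y0 *m y0^T) + l1 *: (y1 *m y1^T) + l2 *: (y2 *m y2^T)
  + l3 *: (y3 *m y3^T).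

Definition Hstar (L : R) (y0 y1 y2 y3 : 'cV[R]_2) : 'M[R]_2 :=
  let P := mx_cols (y2 - y0) (y1 - y3) in
  P *m (\matrix_(i < 2, j < 2) (if i == j then (if i == 0 then L else - L) else 0))
    *m invmx P.
End Defs.

(* Main.v *)
Require Import Defs.
From HB Require Import structures.
From mathcomp Require Import all_boot all_order all_algebra.
From mathcomp Require Import all_classical all_reals all_analysis.
Import Order.TTheory GRing.Theory Num.Theory.
Import numFieldNormedType.Exports.
From mathcomp Require Import ring lra.
Local Open Scope classical_set_scope.
Local Open Scope ring_scope.

Lemma quad_derive (R : realType) (M t : R) :
  is_derive t (1:R) (fun x : R => M / 2 * (x * x)) (M * t).
Proof.
have -> : (fun x : R => M / 2 * (x * x)) = (M/2) \*: ((@id R) * (@id R)).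
  by apply: funext => x.
apply: is_derive_eq.
change (M/2 * (t*1 + t*1) = M*t). field.
done.
Qed.
Lemma conv_gap (R : realType) (h dh : R -> R) (th : R) :
  (forall t : R, is_derive t (1:R) h (dh t)) -> (forall s t, s <= t -> dh s <= dh t) ->
  0 <= th -> th <= 1 -> h th <= th * h 1 + (1 - th) * h 0.
Proof.
move=> hd hm th0 th1.
have hc : forall a b : R, {within `[a, b], continuous h}.
  move=> a b; apply: derivable_within_continuous => x _.
  by case: (hd x).
have [->|th0'] := eqVneq th 0; first by lra.
have [->|th1'] := eqVneq th 1; first by lra.
have lt0 : 0 < th by rewrite lt_def th0' th0.
have lt1 : th < 1 by rewrite lt_def eq_sym th1' th1.
have [c0 c0i e0] := MVT lt0 (fun x _ => hd x) (hc 0 th).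
have [c1 c1i e1] := MVT lt1 (fun x _ => hd x) (hc th 1).
move: c0i c1i; rewrite !in_itv /= => /andP[_ c0t] /andP[c1t _].
have := hm c0 c1 (ltW (lt_trans c0t c1t)) => hle.
have : 0 <= th * (1 - th) * (dh c1 - dh c0).
  apply: mulr_ge0; [apply: mulr_ge0; lra | lra].
move: e0 e1; set a := h th; set b := h 0; set c := h 1 => e0 e1.
have -> : th * (1 - th) * (dh c1 - dh c0) = th * (dh c1 * (1 - th)) - (1 - th) * (dh c0 * (th - 0)) by ring.
rewrite -e0 -e1. lra.
Qed.

Lemma gap_bound (R : realType) (g dg : R -> R) (M th : R) :
  (forall t : R, is_derive t (1:R) g (dg t)) ->
  (forall s t, s <= t -> `|dg t - dg s| <= M * (t - s)) ->
  0 <= th -> th <= 1 ->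
  `|th * g 1 + (1 - th) * g 0 - g th| <= M / 2 * (th * (1 - th)).
Proof.
move=> hd hl th0 th1.
set q := (fun x : R => M / 2 * (x * x)).
have h1 := @conv_gap R (g + q) (fun t => dg t + M * t) th
  (fun t => is_deriveD (hd t) (quad_derive _ M t)).
have h2 := @conv_gap R (q - g) (fun t => M * t - dg t) th
  (fun t => is_deriveB (quad_derive _ M t) (hd t)).
have := hl; move=> hl'.
have m1 : forall s t, s <= t -> dg s + M * s <= dg t + M * t.
  move=> s t st; have := hl s t st; rewrite ler_norml => /andP[a b]; lra.
have m2 : forall s t, s <= t -> M * s - dg s <= M * t - dg t.
  move=> s t st; have := hl s t st; rewrite ler_norml => /andP[a b]; lra.
move: (h1 m1 th0 th1) (h2 m2 th0 th1); rewrite /q /= => e1 e2.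
have e1' : g th + M/2*(th*th) <= th*(g 1 + M/2*(1*1)) + (1-th)*(g 0 + M/2*(0*0)) := e1.
have e2' : M/2*(th*th) - g th <= th*(M/2*(1*1) - g 1) + (1-th)*(M/2*(0*0) - g 0) := e2.
rewrite ler_norml; apply/andP; split; nra.
Qed.
Lemma line_derive (R : realType) (f : 'cV[R]_2 -> R) (q w : 'cV[R]_2) (t : R) :
  differentiable f (q + t *: w) ->
  is_derive t (1:R) (fun s : R => f (q + s *: w)) ('d f (q + t *: w) w).
Proof.
move=> df.
have E : (fun h : R => h^-1 *: (((fun s : R => f (q + s *: w)) \o shift t) (h *: (1:R)) - f (q + t *: w)))
   = (fun h : R => h^-1 *: ((f \o shift (q + t *: w)) (h *: w) - f (q + t *: w))).
  apply: funext => h /=.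
  have -> : q + (h%:A + t) *: w = h *: w + (q + t *: w).
    by rewrite [h%:A]mulr1 scalerDl addrCA.
  by [].
have dv : derivable (fun s : R => f (q + s *: w)) t 1.
  by rewrite /derivable E; apply: diff_derivable.
apply: DeriveDef => //.
rewrite -deriveE //; by rewrite /derive E.
Qed.
Lemma dotvE (R : realType) (u v : 'cV[R]_2) : dotv u v = u 0 0 * v 0 0 + u 1 0 * v 1 0.
Proof. rewrite /dotv !big_ord_recl big_ord0 addr0.
by have -> : (lift ord0 ord0 : 'I_2) = 1 by apply: val_inj.
Qed.

Lemma dotv_ge0 (R : realType) (u : 'cV[R]_2) : 0 <= dotv u u.
Proof. by rewrite dotvE -!expr2 addr_ge0 ?sqr_ge0. Qed.

Lemma cs2 (R : realType) (a b : 'cV[R]_2) : `|dotv a b| <= enorm a * enorm b.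
Proof.
rewrite /enorm -sqrtrM ?dotv_ge0 // -sqrtr_sqr; apply: ler_wsqrtr.
rewrite !dotvE. have := sqr_ge0 (a 0 0 * b 1 0 - a 1 0 * b 0 0). nra.
Qed.

Lemma enormZ (R : realType) (c : R) (w : 'cV[R]_2) : enorm (c *: w) = `|c| * enorm w.
Proof.
rewrite /enorm.
have -> : dotv (c *: w) (c *: w) = c ^+ 2 * dotv w w.
  by rewrite !dotvE !mxE; ring.
by rewrite sqrtrM ?sqrtr_sqr // sqr_ge0.
Qed.

Lemma enorm_sq (R : realType) (w : 'cV[R]_2) : enorm w * enorm w = dotv w w.
Proof. by rewrite /enorm -expr2 sqr_sqrtr // dotv_ge0. Qed.

Lemma col2E (R : realType) (w : 'cV[R]_2) :
  w = w 0 0 *: (delta_mx 0 0 : 'cV[R]_2) + w 1 0 *: (delta_mx 1 0 : 'cV[R]_2).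
Proof.
apply/matrixP => i j; rewrite !mxE.
have -> : j = 0 by apply: ord1.
case: i => [[|[|//]] Hi] /=.
  have -> : Ordinal Hi = 0 by apply: val_inj.
  by rewrite mulr1 mulr0 addr0.
have -> : Ordinal Hi = 1 by apply: val_inj.
by rewrite mulr0 mulr1 add0r.
Qed.

Lemma d_grad (R : realType) (f : 'cV[R]_2 -> R) x w :
  'd f x w = dotv (grad f x) w.
Proof.
rewrite {1}(col2E _ w) linearD !linearZ /= dotvE /grad !mxE.
by rewrite /GRing.scale /= mulrC [X in _ + X]mulrC.
Qed.
Lemma dotvBl (R : realType) (a b w : 'cV[R]_2) : dotv (a - b) w = dotv a w - dotv b w.
Proof. rewrite !dotvE !mxE; ring. Qed.

Lemma gap2 (R : realType) (L : R) (f : 'cV[R]_2 -> R) (p q : 'cV[R]_2) (th : R) :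
  C11 L f -> 0 <= th -> th <= 1 ->
  `|th * f p + (1 - th) * f q - f (q + th *: (p - q))|
    <= L * dotv (p - q) (p - q) / 2 * (th * (1 - th)).
Proof.
move=> [fd fl] th0 th1.
set w := p - q.
have hd : forall t : R, is_derive t (1:R) (fun s : R => f (q + s *: w))
     (dotv (grad f (q + t *: w)) w).
  move=> t; apply: is_derive_eq; first by apply: line_derive.
  exact: d_grad.
have hl : forall s t : R, s <= t ->
    `|dotv (grad f (q + t *: w)) w - dotv (grad f (q + s *: w)) w| <= L * dotv w w * (t - s).
  move=> s t st.
  rewrite -dotvBl.
  apply: (le_trans (cs2 _ _ _)).
  have e : (q + t *: w) - (q + s *: w) = (t - s) *: w.
    by apply/matrixP => i j; rewrite !mxE; ring.
  have := fl (q + t *: w) (q + s *: w); rewrite e enormZ ger0_norm ?subr_ge0 // => hf.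
  have hw : 0 <= enorm w by rewrite /enorm sqrtr_ge0.
  have := enorm_sq _ w => hsq.
  have := ler_wpM2r hw hf; rewrite -hsq; nra.
have := gap_bound _ _ _ _ _ hd hl th0 th1.
have -> : q + 1 *: w = p by rewrite scale1r /w addrC subrK.
have -> : q + 0 *: w = q by rewrite scale0r addr0.
by [].
Qed.
Lemma sum2 (R : realType) (F : 'I_2 -> R) : \sum_(i < 2) F i = F 0 + F 1.
Proof.
rewrite !big_ord_recl big_ord0 addr0.
by have -> : (lift ord0 ord0 : 'I_2) = 1 by apply: val_inj.
Qed.

Lemma ord2 (i : 'I_2) : i = 0 \/ i = 1.
Proof.
case: i => [[|[|//]] Hi]; [left|right]; by apply: val_inj.
Qed.

Lemma ord1' (j : 'I_1) : j = 0.
Proof. exact: ord1. Qed.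

Lemma frob_HG (R : realType) (L l1 l2 l3 : R) (y0 y1 y2 y3 : 'cV[R]_2) :
  let u0 := y2 0 0 - y0 0 0 in let u1 := y2 1 0 - y0 1 0 in
  let v0 := y1 0 0 - y3 0 0 in let v1 := y1 1 0 - y3 1 0 in
  let dl := u0 * v1 - v0 * u1 in
  let G00 := - y0 0 0 * y0 0 0 + l1 * (y1 0 0 * y1 0 0) + l2 * (y2 0 0 * y2 0 0) + l3 * (y3 0 0 * y3 0 0) in
  let G01 := - y0 0 0 * y0 1 0 + l1 * (y1 0 0 * y1 1 0) + l2 * (y2 0 0 * y2 1 0) + l3 * (y3 0 0 * y3 1 0) in
  let G11 := - y0 1 0 * y0 1 0 + l1 * (y1 1 0 * y1 1 0) + l2 * (y2 1 0 * y2 1 0) + l3 * (y3 1 0 * y3 1 0) in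
  dl != 0 ->
  frob (Gmx l1 l2 l3 y0 y1 y2 y3) (Hstar L y0 y1 y2 y3) =
  L / dl * (G00 * (u0 * v1 + v0 * u1) - 2 * G01 * (u0 * v0) + 2 * G01 * (u1 * v1)
            - G11 * (u1 * v0 + v1 * u0)).
Proof.
move=> u0 u1 v0 v1 dl G00 G01 G11 dl0.
set P := mx_cols (y2 - y0) (y1 - y3).
set K : 'M[R]_2 := dl^-1 *: \matrix_(i < 2, j < 2)
  (if i == 0 then (if j == 0 then v1 else - v0) else (if j == 0 then - u1 else u0)).
have PK : P *m K = 1%:M.
  apply/matrixP => i j; rewrite !mxE sum2 !mxE.
  move: dl0; rewrite /dl /u0 /u1 /v0 /v1 => dl0.
  by case: (ord2 i) => ->; case: (ord2 j) => -> /=; field.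
have [uP _] := mulmx1_unit PK.
have iE : invmx P = K.
  by rewrite -[invmx P]mulmx1 -PK mulmxA mulVmx // mul1mx.
rewrite /Hstar -/P iE /frob /Gmx.
rewrite !sum2 !mxE !sum2 !mxE !sum2 !mxE /= !big_ord1 !mxE.
rewrite /G00 /G01 /G11 /dl /u0 /u1 /v0 /v1.
move: dl0; rewrite /dl /u0 /u1 /v0 /v1 => dl0.

by field.
Qed.

Local Close Scope classical_set_scope.

Theorem theorem5p3 (R : realType) (L : R) (f : 'cV[R]_2 -> R)
  (y0 y1 y2 y3 : 'cV[R]_2) (m : 'cV[R]_2 -> R) (l1 l2 l3 : R) :
  0 < L ->
  C11 L f ->
  aff_indep y1 y2 y3 ->
  dotv (y2 - y1) (y3 - y1) < 0 ->
  is_affine m -> m y1 = f y1 -> m y2 = f y2 -> m y3 = f y3 ->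
  l1 + l2 + l3 = 1 -> l1 *: y1 + l2 *: y2 + l3 *: y3 = y0 ->
  0 < l2 -> l3 < 0 ->
  l1 * dotv (y2 - y1) (y3 - y1) - l3 * dotv (y2 - y3) (y1 - y3) < 0 ->
  `|m y0 - f y0| <= 2^-1 * frob (Gmx l1 l2 l3 y0 y1 y2 y3) (Hstar L y0 y1 y2 y3).
Proof.
move=> L0 C aff d0 [g [c mE]] m1 m2 m3 hl hy0 l2p l3n hcond.
have e0 : y0 0 0 = l1 * y1 0 0 + l2 * y2 0 0 + l3 * y3 0 0 by rewrite -hy0 !mxE.
have e1 : y0 1 0 = l1 * y1 1 0 + l2 * y2 1 0 + l3 * y3 1 0 by rewrite -hy0 !mxE.
have hB : dotv (y2 - y3) (y1 - y3) = dotv (y3 - y1) (y3 - y1) - dotv (y2 - y1) (y3 - y1).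
  by rewrite !dotvE !mxE; ring.
have nB := dotv_ge0 _ (y3 - y1).
rewrite hB in hcond.
have sp : 0 < l1 + l3 by nra.
have l1p : 0 < l1 by lra.
have l2l : l2 < 1 by lra.
set D := (y2 0 0 - y1 0 0) * (y3 1 0 - y1 1 0) - (y2 1 0 - y1 1 0) * (y3 0 0 - y1 0 0).
have D0 : D != 0.
  apply/eqP => D0.
  have [h1 h2] : y3 0 0 - y1 0 0 = 0 /\ - (y2 0 0 - y1 0 0) = 0.
    apply: aff; apply/matrixP => i j; rewrite !mxE (ord1' j).
    case: (ord2 i) => -> /=; move: D0; rewrite /D => D0; lra.
  have [h3 h4] : y3 1 0 - y1 1 0 = 0 /\ - (y2 1 0 - y1 1 0) = 0.
    apply: aff; apply/matrixP => i j; rewrite !mxE (ord1' j).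
    case: (ord2 i) => -> /=; move: D0; rewrite /D => D0; lra.
  have [h5 _] : (1:R) = 0 /\ (0:R) = 0.
    apply: aff; apply/matrixP => i j; rewrite !mxE (ord1' j).
    case: (ord2 i) => -> /=; lra.
  by move: h5; apply/eqP; rewrite oner_eq0.
have dl0 : (y2 0 0 - y0 0 0) * (y1 1 0 - y3 1 0) - (y1 0 0 - y3 0 0) * (y2 1 0 - y0 1 0) != 0.
  have -> : (y2 0 0 - y0 0 0) * (y1 1 0 - y3 1 0) - (y1 0 0 - y3 0 0) * (y2 1 0 - y0 1 0)
          = - (1 - l2) * D.
    have l1E : l1 = 1 - l2 - l3 by lra.
    rewrite /D e0 e1 l1E; ring.
  by rewrite mulf_neq0 // oppr_eq0 subr_eq0 eq_sym lt_eqF.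
rewrite (frob_HG _ L l1 l2 l3 _ _ _ _ dl0).
have mA : m y0 - f y0 = l1 * f y1 + l2 * f y2 + l3 * f y3 - f y0.
  rewrite -m1 -m2 -m3 !mE !dotvE e0 e1.
  have l1E : l1 = 1 - l2 - l3 by lra.
  rewrite l1E. ring.
rewrite mA.
set z : 'cV[R]_2 := (l1 + l3)^-1 *: (l1 *: y1 + l3 *: y3).
have s0 : l1 + l3 != 0 by rewrite gt_eqF.
have l10 : l1 != 0 by rewrite gt_eqF.
have eqA : z + l2 *: (y2 - z) = y0.
  apply/matrixP => i j; rewrite !mxE (ord1' j).
  have l2E : l2 = 1 - l1 - l3 by lra.
  case: (ord2 i) => -> /=; rewrite ?e0 ?e1 l2E; field; by rewrite ?s0 ?l10.
set t := (l1 + l3) / l1.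
have eqB : y3 + t *: (z - y3) = y1.
  apply/matrixP => k k'; rewrite !mxE (ord1' k').
  case: (ord2 k) => -> /=; rewrite /t; field; by rewrite ?s0 ?l10.
have t0 : 0 <= t by rewrite /t divr_ge0 // ltW.
have t1 : t <= 1 by rewrite /t ler_pdivrMr // mul1r; lra.
have gA := gap2 _ L f y2 z l2 C (ltW l2p) (ltW l2l).
rewrite eqA in gA.
have gB := gap2 _ L f z y3 t C t0 t1.
rewrite eqB in gB.
set FA := l2 * f y2 + (1 - l2) * f z - f y0 in gA.
set FB := t * f z + (1 - t) * f y3 - f y1 in gB.
have EE : l1 * f y1 + l2 * f y2 + l3 * f y3 - f y0 = FA - l1 * FB.
  rewrite /FA /FB /t; have l2E : l2 = 1 - l1 - l3 by lra.
  rewrite l2E; field; by rewrite ?s0 ?l10.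
rewrite EE.
apply: (le_trans (ler_normB _ _)).
rewrite normrM (gtr0_norm l1p).
apply: (le_trans (lerD gA (ler_wpM2l (ltW l1p) gB))).
rewrite le_eqVlt; apply/orP; left; apply/eqP.
move: dl0; rewrite e0 e1 => dl0.
rewrite /z /t !dotvE !mxE ?e0 ?e1.
have l2E : l2 = 1 - l1 - l3 by lra.
move: dl0; rewrite l2E => dl0.
field.
by rewrite dl0 l10 s0.
Qed.
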